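(* Let $H = (V,E)$ be a hypertree with $|V| = n$ such that $|e|$ is prime for each edge $e \in E$. Fix an ordering of the edges $E = \{e_1, \ldots, e_k\}$ with $|(e_{1} \cup \cdots \cup e_{i})\cap e_{i+1}| = 1$ for all $1 \leq i < k$, and fix a cyclic permutation $c_i: e_i\rightarrow e_i$ of each edge $e_i$. Then $$X_H = \sum_{\pi} F_{\mathrm{Des}_H(\pi)},$$ the sum over all bijections $\pi: V \to [n]$, where $\mathrm{Des}_H(\pi)$ is the set of $H$-descents of $\pi$ with respect to the chosen edge-ordering and cyclic permutations.
   Context: A hypergraph is a pair $H=(V,E)$ with $V$ finite and $E$ a family of subsets of $V$ with $|e|>1$. A path is a sequence $v_1, e_1, v_2, \ldots, e_m, v_{m+1}$ with $e_i \in E$, $v_i, v_{i+1} \in e_i$, edges distinct and vertices distinct except that $v_1 = v_{m+1}$ is allowed; if $v_1 = v_{m+1}$ and $m>1$ it is a cycle. A hypertree is a connected hypergraph with no cycles; between any two distinct vertices there is a unique path. $H$-descents: for a bijection $\pi: V \to [n]$ and $i \in [n-1]$, let $\pi^{-1}(i) = v_1, e_{j_1}, v_2, \ldots, e_{j_l}, v_{l+1} = \pi^{-1}(i+1)$ be the unique path, and let $j_r = \min(j_1,\ldots,j_l)$; then $i \in \mathrm{Des}_H(\pi)$ iff $\pi(c_{j_r}(v_r)) > \pi(c_{j_r}(v_{r+1}))$. A coloring $\chi: V \to \mathbb{P}=\{1,2,\ldots\}$ is proper if it is nonconstant on every edge; $X_H = \sum_\chi \prod_{v\in V} x_{\chi(v)}$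 over proper colorings. For $S \subseteq [n-1]$, $F_S = \sum x_{i_1}\cdots x_{i_n}$ over $i_1 \le \cdots \le i_n$ in $\mathbb{P}$ with $i_j < i_{j+1}$ whenever $j \in S$. *)

(* Defs.v *)
From HB Require Import structures.
From mathcomp Require Import all_boot all_order all_algebra all_fingroup.
From mathcomp Require Import mpoly.
From Stdlib Require Import ClassicalEpsilon.

Set Implicit Arguments.
Unset Strict Implicit.
Unset Printing Implicit Defensive.

Import GRing.Theory.

(* A hypergraph on the finite vertex type V is given by an ordered list of
   edges E = [e_1; ...; e_k] (0-based indices in Rocq).                    *)
Section Hyper.
Variable V : finType.
Implicit Types (E : seq {set V}).

Definition edge E (j : nat) : {set V} := nth set0 E j.

Definition is_hypergraph E : bool :=
  uniq E && all (fun e : {set V} => 1 < #|e|) E.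

(* A path v_1, e_{j_1}, v_2, ..., e_{j_m}, v_{m+1} is encoded by its start
   vertex a = v_1 and the list of steps [(j_1, v_2); ...; (j_m, v_{m+1})]. *)
Fixpoint steps_ok E (a : V) (st : seq (nat * V)) : bool :=
  if st is (j, v) :: st' then
    [&& j < size E, a \in edge E j, v \in edge E j & steps_ok E v st']
  else true.

(* edges distinct, vertices distinct except that v_1 = v_{m+1} is allowed *)
Definition is_path E (a : V) (st : seq (nat * V)) : bool :=
  [&& steps_ok E a st, uniq (map fst st), uniq (map snd st)
    & uniq (belast a (map snd st))].

Definition path_end (a : V) (st : seq (nat * V)) : V := last a (map snd st).

Definition is_cycle E (a : V) (st : seq (nat * V)) : bool :=
  [&& is_path E a st, path_end a st == a & 1 < size st].

Definition is_connected E : Prop :=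
  forall x y : V, x != y -> exists st, is_path E x st && (path_end x st == y).

Definition is_hypertree E : Prop :=
  [/\ is_hypergraph E, is_connected E & forall a st, ~~ is_cycle E a st].

(* c is a cyclic permutation of the set e (extended by the identity off e) *)
Definition is_cyclic_perm_of (e : {set V}) (c : {perm V}) : bool :=
  perm_on e c && [forall x in e, porbit c x == e].

(* H-descents of p : V -> [n] (positions 0-based: i stands for i+1).
   i is a descent iff, along the (unique, in a hypertree) path from
   p^-1(i) to p^-1(i+1), with r the position of the edge of minimal index
   j_r, we have p (c_{j_r} v_r) > p (c_{j_r} v_{r+1}).                      *)
Definition desH E (c : nat -> {perm V}) (n : nat) (p : {ffun V -> 'I_n})
    (i : nat) : Prop :=
  i.+1 < n /\
  exists (a b : V) (st : seq (nat * V)),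
    [/\ val (p a) = i, val (p b) = i.+1, is_path E a st, path_end a st = b &
      let js := map fst st in
      let jmin := foldr minn (head 0 js) js in
      let r := index jmin js in
      let vs := a :: map snd st in
      val (p (c jmin (nth a vs r))) > val (p (c jmin (nth a vs r.+1)))].

(* proper colorings with colors in 'I_m (standing for {1,...,m}) *)
Definition proper E (m : nat) (chi : {ffun V -> 'I_m}) : bool :=
  all (fun e : {set V} => [exists x in e, exists y in e, chi x != chi y]) E.

(* chromatic symmetric function X_H in the variables x_1, ..., x_m
   (i.e. with x_{m+1} = x_{m+2} = ... = 0) *)
Definition XH E (m : nat) : {mpoly int[m]} :=
  \sum_(chi : {ffun V -> 'I_m} | proper E chi) \prod_(v : V) 'X_(chi v).

End Hyper.

Definition pbool (P : Prop) : bool :=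
  if excluded_middle_informative P then true else false.

(* fundamental quasisymmetric function F_S (S a subset of the 0-based
   positions {0,...,n-2}) in the variables x_1, ..., x_m *)
Definition fund_ok (S : nat -> Prop) (t : seq nat) : Prop :=
  forall j, j.+1 < size t ->
    nth 0 t j <= nth 0 t j.+1 /\ (S j -> nth 0 t j < nth 0 t j.+1).

Definition Fq (n m : nat) (S : nat -> Prop) : {mpoly int[m]} :=
  \sum_(s : n.-tuple 'I_m | pbool (fund_ok S (map val s))) \prod_(x <- s) 'X_x.

(* Main.v *)
Require Import Defs.
From HB Require Import structures.
From mathcomp Require Import all_boot all_order all_algebra all_fingroup.
From mathcomp Require Import mpoly.
From Stdlib Require Import Relations ClassicalEpsilon.

Set Implicit Arguments.
Unset Strict Implicit.
Unset Printing Implicit Defensive.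

Section Paths.
Variable V : finType.
Variable E : seq {set V}.
Local Notation e := (edge E).

Definition hstep (F : pred nat) (x y : V) : Prop :=
  exists j, [/\ F j, j < size E, x \in e j & y \in e j].
Definition conn F := clos_refl_trans V (hstep F).

Lemma conn_refl (F : pred nat) x : conn F x x.
Proof. exact: rt_refl. Qed.

Lemma conn_trans (F : pred nat) x y z : conn F x y -> conn F y z -> conn F x z.
Proof. exact: rt_trans. Qed.

Lemma conn_step (F : pred nat) j x y : F j -> j < size E -> x \in e j -> y \in e j -> conn F x y.
Proof. by move=> *; apply: rt_step; exists j. Qed.

Lemma conn_sym (F : pred nat) x y : conn F x y -> conn F y x.
Proof.
elim=> [a b [j [Fj jl ha hb]]| a | a b d _ IH1 _ IH2].
- exact: conn_step Fj jl hb ha.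
- exact: rt_refl.
- exact: rt_trans IH2 IH1.
Qed.

Lemma conn_mono (F G : pred nat) x y : (forall j, F j -> G j) -> conn F x y -> conn G x y.
Proof.
move=> FG; elim=> [a b [j [Fj jl ha hb]]| a | a b d _ IH1 _ IH2].
- exact: conn_step (FG _ Fj) jl ha hb.
- exact: rt_refl.
- exact: rt_trans IH1 IH2.
Qed.

Lemma steps_ok_cat a s1 s2 :
  steps_ok E a (s1 ++ s2) = steps_ok E a s1 && steps_ok E (path_end a s1) s2.
Proof.
elim: s1 a => [|[j v] s1 IH] a //=.
by rewrite IH /path_end /= !andbA.
Qed.

Lemma steps_conn (F : pred nat) a st :
  steps_ok E a st -> all F (map fst st) -> conn F a (path_end a st).
Proof.
elim: st a => [|[j v] st IH] a /=; first by move=> *; exact: conn_refl.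
case/and4P=> jl ha hv hs /andP[Fj Fs].
apply: conn_trans (IH v hs Fs); exact: conn_step Fj jl ha hv.
Qed.

Fixpoint spath (a : V) (st : seq (nat * V)) : bool :=
  if st is (j, v) :: st' then
    [&& j < size E, a \in e j, v \in e j, a \notin v :: map snd st',
        j \notin map fst st' & spath v st']
  else true.

Lemma spathE a st :
  spath a st = [&& steps_ok E a st, uniq (a :: map snd st) & uniq (map fst st)].
Proof.
elim: st a => [|[j v] st IH] a //=.
rewrite IH /=.
by case: (j < size E); case: (a \in e j); case: (v \in e j);
   case: (a \in _); case: (j \in _); case: (steps_ok _ _ _); case: (v \in _);
   case: (uniq _); case: (uniq _).
Qed.

Lemma spath_cat a s1 s2 : spath a (s1 ++ s2) -> spath (path_end a s1) s2.
Proof.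
elim: s1 a => [|[j v] s1 IH] a //=.
by case/and5P=> _ _ _ _ /andP[_ /IH].
Qed.

Lemma spath_is_path a st : spath a st -> is_path E a st.
Proof.
rewrite spathE => /and3P[hs hu hf].
apply/and4P; split => //; first by case/andP: hu.
move: hu; rewrite lastI rcons_uniq; by case/andP.
Qed.

Lemma uniq_belast_aux (a : V) s :
  uniq (belast a s) -> uniq s -> a != last a s -> uniq (a :: s).
Proof.
case/lastP: s => [|s y] //.
rewrite belast_rcons last_rcons /= => /andP[has us] ur ay.
by rewrite mem_rcons inE negb_or ay has ur.
Qed.

Lemma is_path_spath a st : is_path E a st -> path_end a st != a -> spath a st.
Proof.
case/and4P=> hs hf hsnd hb hne.
rewrite spathE hs hf andbT.
by apply: uniq_belast_aux hb hsnd _; rewrite eq_sym.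
Qed.

Lemma split_snd (x : V) (s : seq (nat * V)) :
  x \in map snd s -> exists s1 j s2, s = s1 ++ (j, x) :: s2.
Proof.
elim: s => [|[j v] s IH] //=; rewrite inE => /orP[/eqP->|/IH[s1 [j' [s2 ->]]]].
- by exists [::], j, s.
- by exists ((j, v) :: s1), j', s2.
Qed.

Lemma split_fst (j : nat) (s : seq (nat * V)) :
  j \in map fst s -> exists s1 v s2, s = s1 ++ (j, v) :: s2.
Proof.
elim: s => [|[j0 v] s IH] //=; rewrite inE => /orP[/eqP->|/IH[s1 [v' [s2 ->]]]].
- by exists [::], v, s.
- by exists ((j0, v) :: s1), v', s2.
Qed.

Lemma conn_spath (F : pred nat) x y :
  conn F x y -> exists st, [/\ spath x st, path_end x st = y & all F (map fst st)].
Proof.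
move=> H; have := clos_rt_rt1n _ _ _ _ H; clear H; elim=> [a|a u b [j [Fj jl ha hu]] _ [Q [sQ eQ fQ]]].
  by exists [::].
have sQ' := sQ.
case xin: (a \in u :: map snd Q).
  move: xin; rewrite inE => /orP[/eqP->|/split_snd[s1 [j' [s2 def]]]].
    by exists Q.
  exists s2; rewrite def in sQ eQ fQ.
  have := spath_cat sQ => /= /and5P[_ _ _ _ /andP[_ sp]].
  split => //.
    by move: eQ; rewrite /path_end map_cat last_cat.
  by move: fQ; rewrite map_cat all_cat /= => /and3P[].
case jin: (j \in map fst Q).
  case/split_fst: jin => s1 [v [s2 def]].
  exists ((j, v) :: s2); rewrite def in sQ eQ fQ xin.
  have := spath_cat sQ; rewrite /= => /and5P[_ _ hv _ /andP[hj hs]].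
  rewrite /= jl ha hv hj hs /=.
  split => //.
  - rewrite andbT; apply/negP => hin; move/negP: xin; apply.
    rewrite inE map_cat mem_cat /= inE.
    by rewrite inE in hin; case/orP: hin => ->; rewrite !orbT.
  - by move: eQ; rewrite /path_end map_cat last_cat.
  - by move: fQ; rewrite map_cat all_cat /= Fj => /and3P[].
exists ((j, u) :: Q); split => //=.
- by rewrite jl ha hu xin jin sQ.
- by rewrite Fj.
Qed.

End Paths.
Section Rep.
Variable V : finType.
Variable E : seq {set V}.
Hypothesis htree : is_hypertree E.
Local Notation e := (edge E).
Local Notation conn := (conn E).

Lemma edge_big f : f < size E -> 1 < #|e f|.
Proof.
case: htree => /andP[_ /allP A] _ _ fl.
by apply: A; rewrite /edge mem_nth.
Qed.

Lemma no_av f x x' : f < size E -> x \in e f -> x' \in e f ->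
  conn (fun g => g != f) x x' -> x = x'.
Proof.
move=> fl hx hx' /conn_spath[st [sp ep fa]].
apply/eqP; apply/negPn/negP => nxx.
case: htree => _ _ /(_ x (rcons st (f, x))); apply/negP/negPn.
have stn : st != [::] by move: ep nxx; case: (st) => //= <-; rewrite eqxx.
move: sp; rewrite spathE => /and3P[so ux uf].
apply/and3P; split.
- apply/and4P; split.
  + rewrite -cats1 steps_ok_cat so /= ep fl hx' hx //.
  + rewrite map_rcons rcons_uniq uf andbT.
    by apply/negP => /(allP fa); rewrite eqxx.
  + by rewrite map_rcons rcons_uniq; exact: ux.
  + by rewrite map_rcons belast_rcons.
- by rewrite /path_end map_rcons last_rcons.
- by rewrite size_rcons ltnS lt0n size_eq0.
Qed.

Definition rep f z := epsilon (inhabits z) (fun x => x \in e f /\ conn (fun g => g != f) z x).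

Lemma conn_full x y : x != y -> conn predT x y.
Proof.
case: htree => _ hc _ /hc[st /andP[/and4P[so _ _ _] /eqP <-]].
apply: steps_conn so _; exact/allP.
Qed.

Lemma rep_spec f z : f < size E -> rep f z \in e f /\ conn (fun g => g != f) z (rep f z).
Proof.
move=> fl; rewrite /rep.
apply: (@epsilon_spec V (inhabits z) (fun x => x \in e f /\ conn (fun g => g != f) z x)).
have : exists y, y \in e f.
  by have /card_gt1P[y [_ [hy _ _]]] := edge_big fl; exists y.
case=> y hy.
have : conn predT z y.
  case: (eqVneq z y) => [->|]; [exact: conn_refl | exact: conn_full].
move=> H; have R := clos_rt_rt1n _ _ _ _ H; clear H; move: hy.
elim: R => [a ha| a u b [j [_ jl ha hu]] _ IH hb]; first by exists a; split=> //; exact: conn_refl.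
case: (IH hb) => x [hx cx].
case: (eqVneq j f) => [jf|jf].
  by exists a; split; [rewrite -jf | exact: conn_refl].
exists x; split => //; apply: conn_trans cx; exact: conn_step jl ha hu.
Qed.

Lemma rep_in f z : f < size E -> rep f z \in e f.
Proof. by move=> fl; case: (rep_spec z fl). Qed.

Lemma rep_conn f a b : f < size E -> conn (fun g => g != f) a b -> rep f a = rep f b.
Proof.
move=> fl cab; case: (rep_spec a fl) => ha ca; case: (rep_spec b fl) => hb cb.
apply: no_av fl ha hb _.
apply: conn_trans (conn_sym ca) (conn_trans cab cb).
Qed.

Lemma rep_id f z : f < size E -> z \in e f -> rep f z = z.
Proof.
move=> fl hz; case: (rep_spec z fl) => h c.
by apply/esym; apply: no_av fl hz h c.
Qed.

End Rep.

Lemma foldr_minn_le a (s : seq nat) : foldr minn a s <= a /\ forall j, j \in s -> foldr minn a s <= j.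
Proof.
elim: s => [|x s [IH1 IH2]] /=; first by [].
split; first by rewrite geq_min IH1 orbT.
move=> j; rewrite inE => /orP[/eqP->|/IH2 h]; first by rewrite geq_min leqnn.
by rewrite geq_min h orbT.
Qed.

Lemma foldr_minn_mem a (s : seq nat) : foldr minn a s \in a :: s.
Proof.
elim: s => [|x s IH]; first by rewrite inE.
change (minn x (foldr minn a s) \in [:: a, x & s]).
case: (leqP x (foldr minn a s)) => h.
  by rewrite !inE eqxx orbT.
move: IH; rewrite !inE => /orP[->|->]; by rewrite ?orbT.
Qed.

Lemma nth_last_cat (T : Type) (x0 a : T) s t : nth x0 (a :: s ++ t) (size s) = last a s.
Proof. by elim: s a => [|y s IH] a //=. Qed.

Lemma nth_mid_cat (T : Type) (x0 a v : T) s t : nth x0 (a :: s ++ v :: t) (size s).+1 = v.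
Proof. by rewrite /= nth_cat ltnn subnn. Qed.

Section PathMin.
Variable V : finType.
Variable E : seq {set V}.
Hypothesis htree : is_hypertree E.
Local Notation e := (edge E).
Local Notation rep := (rep E).

Lemma notin_all (g : nat) (s : seq nat) : g \notin s -> all (fun j => j != g) s.
Proof. by move=> h; apply/allP => j hj; apply/eqP => eq; rewrite -eq hj in h. Qed.

Lemma path_min a b st : is_path E a st -> path_end a st = b -> a != b ->
  let js := map fst st in let jm := foldr minn (head 0 js) js in
  let r := index jm js in let vs := a :: map snd st in
  [/\ jm < size E, forall g, g < jm -> rep g a = rep g b, rep jm a = nth a vs r,
      rep jm b = nth a vs r.+1 & nth a vs r != nth a vs r.+1].
Proof.
move=> ip eb ab js jm r vs.
have sp : spath E a st by apply: is_path_spath ip _; rewrite eb eq_sym.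
have stn : st != [::] by move: eb ab; case: (st) => //= <-; rewrite eqxx.
have jsn : js != [::] by rewrite /js; case: (st) stn.
have jmin : jm \in js.
  have := foldr_minn_mem (head 0 js) js; rewrite -/jm inE => /orP[/eqP->|//].
  by case: (js) jsn => //= x s _; rewrite inE eqxx.
have jle : forall j, j \in js -> jm <= j by case: (foldr_minn_le (head 0 js) js).
have := sp; rewrite spathE => /and3P[so _ uf].
case/split_fst: jmin => s1 [v [s2 def]].
rewrite def in sp so uf.
move: uf; rewrite map_cat cat_uniq /= => /and4P[_ hn1 hn2 _].
have jm1 : jm \notin map fst s1.
  by apply/negP => h; move/negP: hn1; apply; rewrite h.
have hr : r = size s1.
  by rewrite /r /js def map_cat index_cat (negbTE jm1) /= eqxx addn0 size_map.
have hu : nth a vs r = path_end a s1 by rewrite /vs hr def map_cat -(size_map snd) nth_last_cat.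
have hv : nth a (map snd st) r = v by rewrite hr def map_cat nth_cat size_map ltnn subnn.
rewrite hu hv.
have := spath_cat sp => /= /and5P[jl hue hve hnot /andP[jn2 sp2]].
move: so; rewrite steps_ok_cat => /andP[so1 so2].
have eb2 : path_end v s2 = b by rewrite -eb def /path_end map_cat last_cat.
split => //.
- move=> g gj; have gl : g < size E by apply: ltn_trans gj jl.
  apply: (rep_conn htree gl).
  rewrite -eb; apply: steps_conn.
    by rewrite def steps_ok_cat so1.
  apply/allP => j hj; apply/eqP => eq; subst g.
  by have := jle j hj; rewrite leqNgt gj.
- rewrite (rep_conn htree jl (b := path_end a s1)) ?(rep_id htree jl hue) //.
  apply: steps_conn so1 _; exact: notin_all.
- rewrite -eb2 -(rep_conn htree jl (a := v)) ?(rep_id htree jl hve) //.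
  by apply: steps_conn _ (notin_all jn2); move: sp2; rewrite spathE => /and3P[].
- by move: hnot; rewrite inE negb_or => /andP[].
Qed.

End PathMin.

Section Desc.
Variable V : finType.
Variable E : seq {set V}.
Hypothesis htree : is_hypertree E.
Variable c : nat -> {perm V}.
Local Notation e := (edge E).
Local Notation rep := (rep E).

Definition Jrel a b f :=
  [/\ f < size E, forall g, g < f -> rep g a = rep g b & rep f a != rep f b].

Lemma Jrel_uniq a b f f' : Jrel a b f -> Jrel a b f' -> f = f'.
Proof.
case=> _ h1 n1 [_ h2 n2]; case: (ltngtP f f') => // lt.
- by rewrite h2 ?eqxx in n1.
- by rewrite h1 ?eqxx in n2.
Qed.

Lemma Jrel_ex a b : a != b -> exists f, Jrel a b f.
Proof.
case: (htree) => _ hc _ ab; case/hc: (ab) => st /andP[ip /eqP eb].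
have := path_min htree ip eb ab; cbv zeta => -[jl hg h1 h2 hn].
by eexists; split; [exact: jl | exact: hg | rewrite h1 h2].
Qed.

Lemma Jrel_edge f x y : f < size E -> x \in e f -> y \in e f -> x != y -> Jrel x y f.
Proof.
move=> fl hx hy xy; split => //.
- move=> g gf; apply: (rep_conn htree (ltn_trans gf fl)).
  by apply: (conn_step (F := fun j => j != g)) fl hx hy; rewrite neq_ltn gf orbT.
- by rewrite !(rep_id htree fl).
Qed.

Lemma desH_char n (p : {ffun V -> 'I_n}) a b f : injective p ->
  (p b : nat) = (p a).+1 -> Jrel a b f ->
  desH E c p (p a) <-> (p (c f (rep f b)) < p (c f (rep f a))).
Proof.
move=> pinj hb J.
have ab : a != b.
  by apply/negP => /eqP Eab; move: hb; rewrite Eab => /eqP; rewrite eqn_leq ltnn andbF.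
case: (htree) => _ hc _.
split.
- case=> _ [a' [b' [st [ha' hb' ip eb H]]]].
  have a'a : a' = a by apply: pinj; apply: val_inj.
  have b'b : b' = b by apply: pinj; apply: ord_inj; rewrite hb' hb.
  subst a'; rewrite b'b in eb H.
  have := path_min htree ip eb ab; cbv zeta => -[jl hg h1 h2 hn].
  have jf := Jrel_uniq (And3 jl hg (eq_ind_r (fun x => x != _) (eq_ind_r (fun y => _ != y) hn h2) h1)) J.
  move: H; cbv zeta; by rewrite -h1 -h2 jf.
- move=> H; split; first by rewrite -hb ltn_ord.
  case/hc: (ab) => st /andP[ip /eqP eb].
  have := path_min htree ip eb ab; cbv zeta => -[jl hg h1 h2 hn].
  have jf := Jrel_uniq (And3 jl hg (eq_ind_r (fun x => x != _) (eq_ind_r (fun y => _ != y) hn h2) h1)) J.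
  exists a, b, st; split => //; cbv zeta; by rewrite -h1 -h2 jf.
Qed.

End Desc.

Section Block.
Variable V : finType.
Variable E : seq {set V}.
Variable c : nat -> {perm V}.
Hypothesis hprime : forall e, e \in E -> prime #|e|.
Hypothesis hcyc : forall i, i < size E -> is_cyclic_perm_of (edge E i) (c i).
Local Notation e := (edge E).

Lemma cyc_in f x : f < size E -> x \in e f -> c f x \in e f.
Proof. by move=> fl; case/andP: (hcyc fl) => po _; rewrite (perm_closed _ po). Qed.

Lemma cyc_iter_in f k x : f < size E -> x \in e f -> iter k (c f) x \in e f.
Proof. by move=> fl hx; elim: k => //= k IH; exact: cyc_in. Qed.

Lemma cyc_porbit f x : f < size E -> x \in e f -> porbit (c f) x = e f.
Proof. by move=> fl hx; case/andP: (hcyc fl) => _ /forall_inP/(_ x hx)/eqP. Qed.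

Lemma cyc_period f x : f < size E -> x \in e f -> iter #|e f| (c f) x = x.
Proof. by move=> fl hx; rewrite -{1}(cyc_porbit fl hx) iter_porbit. Qed.

Lemma cyc_periodM f q x : f < size E -> x \in e f -> iter (q * #|e f|) (c f) x = x.
Proof.
move=> fl hx; elim: q => [|q IH] //.
by rewrite mulSn iterD cyc_period // cyc_iter_in.
Qed.

Lemma cyc_mod f t x : f < size E -> x \in e f -> iter t (c f) x = iter (t %% #|e f|) (c f) x.
Proof. by move=> fl hx; rewrite {1}(divn_eq t #|e f|) addnC iterD cyc_periodM. Qed.

Lemma cyc_orbit f x y : f < size E -> x \in e f -> y \in e f -> exists k, y = iter k (c f) x.
Proof.
move=> fl hx hy; rewrite -(cyc_porbit fl hx) in hy.
by case/porbitP: hy => k ->; exists k; rewrite permX.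
Qed.

Variable col : V -> nat.
Definition mono f := forall x y, x \in e f -> y \in e f -> col x = col y.

Lemma block f x y : f < size E -> ~ mono f -> x \in e f -> y \in e f -> x != y ->
  exists t, [/\ t < #|e f|, forall s, s < t -> col (iter s.+1 (c f) x) = col (iter s.+1 (c f) y)
                & col (iter t.+1 (c f) x) != col (iter t.+1 (c f) y)].
Proof.
move=> fl nm hx hy xy.
set pf := #|e f|.
have hpr : prime pf by apply: hprime; exact: mem_nth.
have pf0 : 0 < pf := prime_gt0 hpr.
pose P t := col (iter t.+1 (c f) x) != col (iter t.+1 (c f) y).
have [w wl Pw] : exists2 w, w < pf & P w.
  case: (boolP [exists t : 'I_pf, P t]) => [/existsP[t Pt]|/existsPn H]; first by exists t.
  exfalso; apply: nm.
  have H' : forall t, t < pf -> col (iter t.+1 (c f) x) = col (iter t.+1 (c f) y).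
    by move=> t tl; apply/eqP; move: (H (Ordinal tl)); rewrite negbK.
  have hx' := cyc_in fl hx; have hy' := cyc_in fl hy.
  set x' := c f x in hx'; set y' := c f y in hy'.
  have Hall : forall t, col (iter t (c f) x') = col (iter t (c f) y').
    move=> t; rewrite (cyc_mod t fl hx') (cyc_mod t fl hy') /x' /y' -!iterSr.
    by apply: H'; rewrite ltn_pmod.
  have [s0 hs0] := cyc_orbit fl hx' hy'.
  rewrite (cyc_mod _ fl hx') in hs0.
  set s' := s0 %% pf in hs0.
  have s'l : s' < pf by rewrite ltn_pmod.
  have s'0 : 0 < s'.
    rewrite lt0n; apply/negP => /eqP s0'; rewrite s0' /= in hs0.
    by move: hs0; rewrite /x' /y' => /perm_inj eq; rewrite eq eqxx in xy.
  have cop : coprime pf s'.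
    by rewrite prime_coprime ?gtnNdvd.
  have [a _ /dvdnP[q hq]] := Bezoutl s' pf0; rewrite (eqP cop) in hq.
  have shift : forall t, col (iter (t + s') (c f) x') = col (iter t (c f) x').
    by move=> t; rewrite iterD -hs0 Hall.
  have shiftK : forall k t, col (iter (t + k * s') (c f) x') = col (iter t (c f) x').
    elim=> [|k IH] t; first by rewrite mul0n addn0.
    by rewrite mulSn addnA addnAC shift IH.
  have step1 : forall t, col (iter t.+1 (c f) x') = col (iter t (c f) x').
    move=> t; rewrite -(shiftK a t.+1) -addn1 -addnA [1 + _]hq addnC iterD.
    by rewrite cyc_periodM // cyc_iter_in.
  have const : forall t, col (iter t (c f) x') = col x'.
    by elim=> [|t IH] //; rewrite step1.
  move=> u v hu hv.
  have [ku ->] := cyc_orbit fl hx' hu; have [kv ->] := cyc_orbit fl hx' hv.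
  by rewrite !const.
have exP : exists t, P t by exists w.
case: (ex_minnP exP) => t0 Pt0 minP.
exists t0; split => //.
- exact: leq_ltn_trans (minP _ Pw) wl.
- move=> s st; apply/eqP; apply/negPn/negP => Ps.
  by have := minP _ Ps; rewrite leqNgt st.
Qed.


End Block.

Definition lexd (L : nat) (F G : nat -> nat) :=
  exists k, [/\ k < L, forall i, i < k -> F i = G i & F k < G k].
Definition agree (L : nat) (F G : nat -> nat) := forall i, i < L -> F i = G i.

Lemma lexd_irr L F : ~ lexd L F F.
Proof. by case=> k [_ _]; rewrite ltnn. Qed.

Lemma lexd_mono L L' F G : L <= L' -> lexd L F G -> lexd L' F G.
Proof. by move=> LL [k [kl h1 h2]]; exists k; split => //; apply: leq_trans LL. Qed.

Lemma lexd_trans L F G H : lexd L F G -> lexd L G H -> lexd L F H.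
Proof.
case=> k [kl a1 l1] [k' [kl' a2 l2]].
case: (ltngtP k k') => hk.
- exists k; split => //; first by move=> i ik; rewrite a1 // a2 // (ltn_trans ik hk).
  by rewrite -(a2 _ hk).
- exists k'; split => //; first by move=> i ik; rewrite a1 ?a2 // (ltn_trans ik hk).
  by rewrite (a1 _ hk).
- subst k'; exists k; split => //; first by move=> i ik; rewrite a1 ?a2.
  exact: ltn_trans l1 l2.
Qed.

Lemma lexd_agree_r L F G H : lexd L F G -> agree L G H -> lexd L F H.
Proof.
case=> k [kl a1 l1] ag; exists k; split => //.
- by move=> i ik; rewrite a1 // ag // (ltn_trans ik kl).
- by rewrite -ag.
Qed.

Lemma lexd_agree_l L F G H : agree L F G -> lexd L G H -> lexd L F H.
Proof.
move=> ag [k [kl a1 l1]]; exists k; split => //.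
- by move=> i ik; rewrite ag ?a1 // (ltn_trans ik kl).
- by rewrite ag.
Qed.

Lemma lexd_S L F G : lexd L.+1 F G -> lexd L F G \/ (agree L F G /\ F L < G L).
Proof.
case=> k [kl a1 l1]; rewrite ltnS leq_eqVlt in kl; case/orP: kl => [/eqP ek|kl].
- by right; subst k.
- by left; exists k.
Qed.

Lemma lexd_total L F G : [\/ lexd L F G, lexd L G F | agree L F G].
Proof.
elim: L => [|L IH]; first by apply: Or33 => i.
case: IH => [h|h|h].
- by apply: Or31; apply: lexd_mono h.
- by apply: Or32; apply: lexd_mono h.
- case: (ltngtP (F L) (G L)) => hL.
  + by apply: Or31; exists L; split.
  + by apply: Or32; exists L; split => // i /h.
  + apply: Or33 => i; rewrite ltnS leq_eqVlt => /orP[/eqP->//|]; exact: h.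
Qed.

Lemma lexd_first L F G k : k < L -> agree k F G -> F k < G k -> lexd L F G.
Proof. by move=> kl ag lt; exists k. Qed.

Lemma first_diff_uniq F G k k' : agree k F G -> F k != G k -> agree k' F G -> F k' != G k' -> k = k'.
Proof.
move=> a1 n1 a2 n2; case: (ltngtP k k') => // hk.
- by rewrite a2 ?eqxx in n1.
- by rewrite a1 ?eqxx in n2.
Qed.

Lemma lexd_at F G L k : lexd L F G -> agree k F G -> F k != G k -> F k < G k.
Proof.
case=> k' [_ a2 l2] a1 n1.
have nk' : F k' != G k' by rewrite neq_ltn l2.
by rewrite -(first_diff_uniq a2 nk' a1 n1).
Qed.

Section Chain.
Variable V : finType.
Variable p : V -> nat.
Variable N : nat.
Variable K : V -> nat -> nat.
Variable L : nat.
Hypothesis pinj : injective p.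
Hypothesis psurj : forall i, i < N -> exists x, p x = i.
Hypothesis pbnd : forall x, p x < N.
Hypothesis hyp : forall m, m < L -> (forall x y, lexd m (K x) (K y) -> p x < p y) ->
  forall z z', p z' = (p z).+1 -> agree m (K z') (K z) -> K z' m < K z m -> False.

Lemma chain x y : lexd L (K x) (K y) -> p x < p y.
Proof.
suff Q : forall m, m <= L -> forall x y, lexd m (K x) (K y) -> p x < p y by exact: Q.
elim=> [|m IH] ml {x y} x y.
  by case=> k [].
have Qm := IH (ltnW ml).
case/lexd_S => [/Qm //|[ag lt]].
rewrite ltnNge; apply/negP => hyx.
have C : forall d y', p y' + d = p x -> lexd m.+1 (K x) (K y') ->
    exists z z', p z' = (p z).+1 /\ lexd m.+1 (K z') (K z).
  elim=> [|d IHd] y' hd hl.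
    rewrite addn0 in hd; move/pinj: hd => hd; subst y'; by case: (lexd_irr hl).
  have : (p y').+1 < N by apply: leq_ltn_trans (pbnd x); rewrite -hd addnS ltnS leq_addr.
  case/psurj => z'' hz''.
  case: (lexd_total m.+1 (K z'') (K y')) => h.
  - by exists y', z''.
  - apply: (IHd z''); first by rewrite hz'' addSnnS.
    exact: lexd_trans hl h.
  - apply: (IHd z''); first by rewrite hz'' addSnnS.
    apply: lexd_agree_r hl _ => i hi; by rewrite h.
have hl : lexd m.+1 (K x) (K y) by exists m; split.
have [z [z' [hz hzl]]] := C (p x - p y) y (subnKC hyx) hl.
case/lexd_S: hzl => [/Qm|[ag' lt']].
  by rewrite hz ltnNge leqnSn.
by apply: (hyp ml Qm hz ag').
Qed.

End Chain.

Lemma pboolP (P : Prop) : pbool P <-> P.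
Proof. by rewrite /pbool; case: excluded_middle_informative. Qed.

Lemma agree_sym L F G : agree L F G -> agree L G F.
Proof. by move=> h i /h. Qed.

Section Keys.
Variable V : finType.
Variable E : seq {set V}.
Variable c : nat -> {perm V}.
Hypothesis htree : is_hypertree E.
Hypothesis hprime : forall e, e \in E -> prime #|e|.
Hypothesis hcyc : forall i, i < size E -> is_cyclic_perm_of (edge E i) (c i).
Variable col : V -> nat.
Local Notation e := (edge E).
Local Notation rep := (rep E).

Definition PP := #|V|.+1.
Lemma PP_gt0 : 0 < PP. Proof. by []. Qed.

Definition Key (z : V) (i : nat) : nat :=
  if i is k.+1 then col (iter (k %% PP).+1 (c (k %/ PP)) (rep (k %/ PP) z)) else col z.

Definition pos f t := (f * PP + t).+1.

Lemma Key_pos f t z : t < PP -> Key z (pos f t) = col (iter t.+1 (c f) (rep f z)).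
Proof.
move=> tl; rewrite /Key /pos divnMDl // divn_small // addn0.
by rewrite -modnDm modnMl add0n !modn_mod modn_small.
Qed.

Lemma edge_lt f : #|e f| < PP.
Proof. by rewrite ltnS max_card. Qed.

Lemma pos_dec j : j = j %/ PP * PP + j %% PP.
Proof. exact: divn_eq. Qed.

Variable B : nat.
Hypothesis hB : B <= size E.
Hypothesis hnm : forall f, f < B -> ~ mono E col f.

Lemma Key_rep z z' j : rep (j %/ PP) z = rep (j %/ PP) z' -> Key z j.+1 = Key z' j.+1.
Proof. by rewrite /Key => ->. Qed.

Lemma FD z z' f : z != z' -> col z = col z' -> Jrel E z z' f -> f < B ->
  exists t, [/\ t < PP, agree (pos f t) (Key z) (Key z'),
    Key z (pos f t) != Key z' (pos f t) &
    forall s, s <= t -> Key z (pos f s) = col (iter s.+1 (c f) (rep f z)) /\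
                         Key z' (pos f s) = col (iter s.+1 (c f) (rep f z'))].
Proof.
move=> zz cz [fl hg hn] fB.
have [t [tl pre df]] := block hprime hcyc fl (hnm fB) (rep_in htree z fl) (rep_in htree z' fl) hn.
have tP : t < PP by apply: ltn_trans tl (edge_lt f).
exists t; split => //.
- case=> [|j] //; rewrite /pos ltnS => jl.
  case: (ltngtP (j %/ PP) f) => hj.
  + by apply: Key_rep; apply: hg.
  + exfalso; move: jl; rewrite ltnNge => /negP; apply.
    rewrite leq_divRL // in hj.
    apply: leq_trans hj; rewrite mulSn [PP + _]addnC leq_add2l; exact: ltnW.
  + rewrite /Key hj.
    have sl : j %% PP < t.
      by move: jl; rewrite {1}(pos_dec j) hj ltn_add2l.
    exact: pre.
- by rewrite !Key_pos.
- by move=> s st; rewrite !Key_pos //; apply: leq_ltn_trans st tP.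
Qed.

Lemma FD_hi z z' f : col z = col z' -> Jrel E z z' f -> B <= f -> agree (B * PP).+1 (Key z) (Key z').
Proof.
move=> cz [fl hg hn] Bf; case=> [|j] //; rewrite ltnS => jl.
apply: Key_rep; apply: hg.
by apply: leq_trans Bf; rewrite ltn_divLR.
Qed.

Lemma shift f u w t : f < B -> u \in e f -> w \in e f -> u != w -> t < PP ->
  (forall s, s < t -> col (iter s.+1 (c f) u) = col (iter s.+1 (c f) w)) ->
  col (iter t.+1 (c f) u) < col (iter t.+1 (c f) w) ->
  lexd (pos f t) (Key (c f u)) (Key (c f w)).
Proof.
move=> fB hu hw uw tl pre lt.
have fl : f < size E by apply: leq_trans fB hB.
have hcu := cyc_in hcyc fl hu; have hcw := cyc_in hcyc fl hw.
have cuw : c f u != c f w by apply: contra uw => /eqP/perm_inj ->.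
have J := Jrel_edge htree fl hcu hcw cuw.
case: t tl pre lt => [|t] tl pre lt.
  by exists 0; split.
exists (pos f t); split.
- by rewrite /pos ltnS ltn_add2l.
- case=> [|j]; first by move=> _; exact: (pre 0).
  rewrite /pos ltnS => jl.
  case: (ltngtP (j %/ PP) f) => hj.
  + by apply: Key_rep; case: J => _ hg _; apply: hg.
  + exfalso; move: jl; rewrite ltnNge => /negP; apply.
    rewrite leq_divRL // in hj.
    apply: leq_trans hj; rewrite mulSn [PP + _]addnC leq_add2l; apply: ltnW; exact: ltn_trans tl.
  + rewrite /Key hj !(rep_id htree fl) // -!iterSr.
    have sl : j %% PP < t by move: jl; rewrite {1}(pos_dec j) hj ltn_add2l.
    exact: pre.
- rewrite !Key_pos ?(rep_id htree fl) // -?iterSr //; exact: ltn_trans tl.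
Qed.

Definition compat n (p : {ffun V -> 'I_n}) :=
  forall z z', (p z' : nat) = (p z).+1 ->
    col z <= col z' /\ (col z = col z' -> ~ desH E c p (p z)).

End Keys.

Lemma card_ord_lt n k : k <= n -> #|[set i : 'I_n | i < k]| = k.
Proof.
move=> kn.
have -> : [set i : 'I_n | i < k] = [set widen_ord kn j | j : 'I_k].
  apply/setP => i; rewrite !inE; apply/idP/imsetP.
  - by move=> ik; exists (Ordinal ik) => //; apply: val_inj.
  - by case=> j _ ->; rewrite /= ltn_ord.
rewrite card_imset ?card_ord //; by move=> a b /(congr1 val) /= /val_inj.
Qed.

Lemma rank_inj (V : finType) (p : {ffun V -> 'I_#|V|}) : injective p ->
  forall x, (p x : nat) = #|[set y | p y < p x]|.
Proof.
move=> pinj x.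
have bp : bijective p by apply: inj_card_bij pinj _; rewrite card_ord.
have -> : [set y | p y < p x] = p @^-1: [set i : 'I_#|V| | i < p x].
  by apply/setP => y; rewrite !inE.
rewrite on_card_preimset; first by rewrite card_ord_lt // ltnW.
exact: onW_bij.
Qed.

Lemma inj_surj (V : finType) (p : {ffun V -> 'I_#|V|}) : injective p ->
  forall i, i < #|V| -> exists x, (p x : nat) = i.
Proof.
move=> pinj i il; have [g pg gp] := inj_card_bij pinj (eq_leq (card_ord _)).
by exists (g (Ordinal il)); rewrite gp.
Qed.

Lemma val_inj_ffun (V : finType) n (p : {ffun V -> 'I_n}) : injective p -> injective (fun x => val (p x)).
Proof. by move=> pinj a b /val_inj /pinj. Qed.

Section Core.
Variable V : finType.
Variable E : seq {set V}.
Variable c : nat -> {perm V}.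
Hypothesis htree : is_hypertree E.
Hypothesis hprime : forall e, e \in E -> prime #|e|.
Hypothesis hcyc : forall i, i < size E -> is_cyclic_perm_of (edge E i) (c i).
Variable col : V -> nat.
Local Notation e := (edge E).
Local Notation rep := (rep E).
Local Notation Key := (Key E c col).
Local Notation PP := (PP V).
Local Notation pos := (pos V).

Lemma pos_le f t B : f < B -> t < PP -> pos f t <= B * PP.
Proof.
move=> fB tP; rewrite /pos.
apply: leq_trans (_ : f.+1 * PP <= _); last by rewrite leq_mul2r fB orbT.
by rewrite mulSn [PP + _]addnC ltn_add2l.
Qed.

Section Proper.
Hypothesis hprop : forall f, f < size E -> ~ mono E col f.
Let L := (size E * PP).+1.

Lemma key_cmp x y : x != y -> lexd L (Key x) (Key y) \/ lexd L (Key y) (Key x).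
Proof.
move=> xy; case: (ltngtP (col x) (col y)) => h.
- by left; exists 0; split.
- by right; exists 0; split.
have [f J] := Jrel_ex htree xy; have fl : f < size E by case: J.
have [t [tP agt dft _]] := FD htree hprime hcyc hprop xy h J fl.
have pl : pos f t < L by rewrite /L ltnS pos_le.
case: (ltngtP (Key x (pos f t)) (Key y (pos f t))) => hv.
- by left; exists (pos f t); split.
- by right; exists (pos f t); split => // i /agt.
- by rewrite hv eqxx in dft.
Qed.

Lemma proper_order (p : {ffun V -> 'I_#|V|}) : injective p -> compat E c col p ->
  forall x y, lexd L (Key x) (Key y) -> p x < p y.
Proof.
move=> pinj cp.
apply: (chain (p := fun x => val (p x)) (N := #|V|)).
- exact: val_inj_ffun.
- exact: inj_surj.
- by move=> x; rewrite ltn_ord.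
move=> m mL Qm z z' hz ag lt.
case: m mL Qm ag lt => [|k] mL Qm ag lt.
  by case: (cp z z' hz) => hc _; move: lt; rewrite /= ltnNge hc.
have zz : z != z' by apply/eqP => Ez; rewrite Ez ltnn in lt.
have cz : col z = col z' by symmetry; exact: (ag 0).
have [f J] := Jrel_ex htree zz; have fl : f < size E by case: J.
have [t [tP agt dft vals]] := FD htree hprime hcyc hprop zz cz J fl.
have mE : k.+1 = pos f t.
  apply: (first_diff_uniq (agree_sym ag)) agt dft; by rewrite neq_ltn lt orbT.
rewrite mE in lt Qm.
have [v1 v2] := vals t (leqnn t); rewrite v1 v2 in lt.
have pre : forall s, s < t -> col (iter s.+1 (c f) (rep f z')) = col (iter s.+1 (c f) (rep f z)).
  move=> s st; have [w1 w2] := vals s (ltnW st).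
  by rewrite -w1 -w2 agt // /pos ltnS ltn_add2l.
have := (cp z z' hz).2 cz; rewrite (desH_char htree c pinj hz J) => nd.
have hu := rep_in htree z fl; have hw := rep_in htree z' fl.
have wu : rep f z' != rep f z by case: J => _ _; rewrite eq_sym.
have := shift htree hcyc (leqnn _) fl hw hu wu tP pre lt.
by move/Qm.
Qed.

Lemma compat_rank (p : {ffun V -> 'I_#|V|}) : injective p -> compat E c col p ->
  forall x, (p x : nat) = #|[set y | pbool (lexd L (Key y) (Key x))]|.
Proof.
move=> pinj cp x; rewrite (rank_inj pinj); apply: eq_card => y; rewrite !inE.
apply/idP/idP.
- move=> lt; have yx : y != x by apply/eqP => Ey; rewrite Ey ltnn in lt.
  apply/pboolP; case: (key_cmp yx) => // /(proper_order pinj cp) h.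
  by move: lt; rewrite ltnNge ltnW.
- by move/pboolP/(proper_order pinj cp).
Qed.

Lemma proper_uniq (p p' : {ffun V -> 'I_#|V|}) : injective p -> compat E c col p ->
  injective p' -> compat E c col p' -> p = p'.
Proof.
move=> i1 c1 i2 c2; apply/ffunP => x; apply: ord_inj.
by rewrite (compat_rank i1 c1) (compat_rank i2 c2).
Qed.

Definition rk x := #|[set y | pbool (lexd L (Key y) (Key x))]|.

Lemma rk_lt x : rk x < #|V|.
Proof.
rewrite /rk; apply: (@leq_trans #|[set~ x]|.+1).
  rewrite ltnS; apply: subset_leq_card; apply/subsetP => y; rewrite !inE.
  by move/pboolP => h; apply/eqP => Ey; rewrite Ey in h; exact: lexd_irr h.
rewrite cardsC1 prednK //; apply/card_gt0P; by exists x.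
Qed.

Lemma rk_mono x y : lexd L (Key x) (Key y) -> rk x < rk y.
Proof.
move=> h; apply: proper_card; apply/properP; split.
- apply/subsetP => z; rewrite !inE => /pboolP hz; apply/pboolP; exact: lexd_trans hz h.
- exists x; rewrite !inE; first by apply/pboolP.
  by apply/negP => /pboolP /lexd_irr.
Qed.

Definition p0 : {ffun V -> 'I_#|V|} := [ffun x => Ordinal (rk_lt x)].

Lemma p0_inj : injective p0.
Proof.
move=> x y /(congr1 val); rewrite !ffunE /= => h.
apply/eqP; apply/negPn/negP => xy; case: (key_cmp xy) => /rk_mono; by rewrite h ltnn.
Qed.

Lemma p0_compat : compat E c col p0.
Proof.
move=> z z' hz'; have hz := hz'; rewrite !ffunE /= in hz.
have zz : z != z' by apply/eqP => Ez; move: hz; rewrite Ez => /eqP; rewrite eqn_leq ltnn andbF.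
have lxz : lexd L (Key z) (Key z').
  case: (key_cmp zz) => // /rk_mono; by rewrite hz ltnNge leqnSn.
split.
  case: lxz => k [_ ag lt]; case: k ag lt => [|k] ag lt; first exact: ltnW.
  by move: (ag 0 (ltn0Sn k)) => /= ->.
move=> cz.
have [f J] := Jrel_ex htree zz; have fl : f < size E by case: J.
have [t [tP agt dft vals]] := FD htree hprime hcyc hprop zz cz J fl.
rewrite (desH_char htree c p0_inj hz' J) !ffunE /= => h.
have lt := lexd_at lxz agt dft.
have [v1 v2] := vals t (leqnn t); rewrite v1 v2 in lt.
have pre : forall s, s < t -> col (iter s.+1 (c f) (rep f z)) = col (iter s.+1 (c f) (rep f z')).
  move=> s st; have [w1 w2] := vals s (ltnW st).
  by rewrite -w1 -w2 agt // /pos ltnS ltn_add2l.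
have hu := rep_in htree z fl; have hw := rep_in htree z' fl.
have uw : rep f z != rep f z' by case: J.
have := shift htree hcyc (leqnn _) fl hu hw uw tP pre lt.
move=> hl; have := rk_mono (lexd_mono (leqW (pos_le fl tP)) hl).
by rewrite ltnNge (ltnW h).
Qed.

End Proper.
End Core.

Section NonProper.
Variable V : finType.
Variable E : seq {set V}.
Variable c : nat -> {perm V}.
Hypothesis htree : is_hypertree E.
Hypothesis hprime : forall e, e \in E -> prime #|e|.
Hypothesis hcyc : forall i, i < size E -> is_cyclic_perm_of (edge E i) (c i).
Variable col : V -> nat.
Local Notation e := (edge E).
Local Notation rep := (rep E).
Local Notation Key := (Key E c col).
Local Notation PP := (PP V).
Local Notation pos := (pos V).

Variable j0 : nat.
Hypothesis j0l : j0 < size E.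
Hypothesis j0m : mono E col j0.
Hypothesis j0min : forall f, f < j0 -> ~ mono E col f.

Variable p : {ffun V -> 'I_#|V|}.
Hypothesis pinj : injective p.
Hypothesis cp : compat E c col p.

Let M := (j0 * PP).+1.
Definition Key' z i := if i == M then val (p (c j0 (rep j0 z))) else Key z i.

Lemma Key'_lo z i : i < M -> Key' z i = Key z i.
Proof. by rewrite /Key' => h; rewrite (ltn_eqF h). Qed.

Lemma lexd_K' m x y : m <= M -> lexd m (Key x) (Key y) -> lexd m (Key' x) (Key' y).
Proof.
move=> mM [k [km ag lt]]; exists k; split => //.
- by move=> i ik; rewrite !Key'_lo ?ag //; apply: ltn_trans ik (leq_trans km mM).
- by rewrite !Key'_lo //; apply: leq_trans km mM.
Qed.

Lemma np_order x y : lexd M.+1 (Key' x) (Key' y) -> p x < p y.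
Proof.
apply: (chain (p := fun x => val (p x)) (N := #|V|)).
- exact: val_inj_ffun.
- exact: inj_surj.
- by move=> z; rewrite ltn_ord.
move=> m mL Qm z z' hz ag lt.
case: m mL Qm ag lt => [|k] mL Qm ag lt.
  by case: (@cp z z' hz) => hc _; move: lt; rewrite /Key' /= ltnNge hc.
have zz : z != z' by apply/eqP => Ez; rewrite Ez ltnn in lt.
have cz : col z = col z' by symmetry; move: (ag 0 (ltn0Sn k)); rewrite /Key' /=.
have [f J] := Jrel_ex htree zz; have fl : f < size E by case: J.
case: (ltnP f j0) => fj.
  have [t [tP agt dft vals]] := FD htree hprime hcyc j0min zz cz J fj.
  have pM : pos f t < M by rewrite ltnS pos_le.
  have agt' : agree (pos f t) (Key' z) (Key' z').
    by move=> i ip; rewrite !Key'_lo ?agt //; apply: ltn_trans ip pM.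
  have dft' : Key' z (pos f t) != Key' z' (pos f t) by rewrite !Key'_lo.
  have mE : k.+1 = pos f t.
    apply: (first_diff_uniq (agree_sym ag)) agt' dft'; by rewrite neq_ltn lt orbT.
  rewrite mE !Key'_lo // in lt; rewrite mE in Qm.
  have [v1 v2] := vals t (leqnn t); rewrite v1 v2 in lt.
  have pre : forall s, s < t -> col (iter s.+1 (c f) (rep f z')) = col (iter s.+1 (c f) (rep f z)).
    move=> s st; have [w1 w2] := vals s (ltnW st).
    by rewrite -w1 -w2 agt // /pos ltnS ltn_add2l.
  have := (@cp z z' hz).2 cz; rewrite (desH_char htree c pinj hz J) => nd.
  have hu := rep_in htree z fl; have hw := rep_in htree z' fl.
  have wu : rep f z' != rep f z by case: J => _ _; rewrite eq_sym.
  have := shift htree hcyc (ltnW j0l) fj hw hu wu tP pre lt.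
  by move/(lexd_K' (ltnW pM))/Qm.
have agh := FD_hi c cz J fj.
have kM : k.+1 = M.
  apply/eqP; rewrite eqn_leq -ltnS mL /=.
  rewrite leqNgt; apply/negP => kM.
  by move: lt; rewrite !Key'_lo // agh // ltnn.
move: lt; rewrite /Key' kM eqxx.
case: (ltngtP j0 f) fj => // hf _.
  by case: J => _ hg _; rewrite hg // ltnn.
subst f.
have := (@cp z z' hz).2 cz; rewrite (desH_char htree c pinj hz J) => nd lt.
exact: nd lt.
Qed.

Lemma np_false : False.
Proof.
have c_ord : forall a b, a \in e j0 -> b \in e j0 -> a != b -> p (c j0 a) < p (c j0 b) -> p a < p b.
  move=> a b ha hb ab lt; apply: np_order.
  exists M; split => //.
  - move=> i iM; rewrite !Key'_lo //.
    apply: (FD_hi c (B := j0) (f := j0) _ (Jrel_edge htree j0l ha hb ab) (leqnn _) iM).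
    exact: j0m.
  - by rewrite /Key' eqxx !(rep_id htree j0l).
have [x0 hx0] : exists x, x \in e j0.
  by have /card_gt1P[y [_ [hy _ _]]] := edge_big htree j0l; exists y.
case: (arg_maxnP (fun x => val (p x)) hx0) => a ha amax.
have hpo : perm_on (e j0) (c j0) by case/andP: (hcyc j0l).
set b := ((c j0)^-1)%g a.
have hb : b \in e j0 by rewrite /b (perm_closed _ (perm_onV hpo)).
have cb : c j0 b = a by rewrite /b permKV.
have ba : b = a.
  apply/eqP; apply/negPn/negP => ba.
  have hca := cyc_in hcyc j0l ha.
  have : p (c j0 a) < p (c j0 b).
    have hle : p (c j0 a) <= p a := amax _ hca.
    rewrite cb ltn_neqAle hle andbT.
    apply/eqP => /ord_inj /pinj ca; rewrite -ca in cb.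
    by move/perm_inj: cb => E'; rewrite E' eqxx in ba.
  move/(c_ord a b ha hb); rewrite eq_sym ba => /(_ isT).
  have hle' : p b <= p a := amax _ hb.
  by rewrite ltnNge hle'.
have /card_gt1P[y1 [y2 [hy1 hy2 y12]]] := edge_big htree j0l.
have [y [hy ya]] : exists y, y \in e j0 /\ y != a.
  case: (eqVneq y1 a) => [ea|]; last by exists y1.
  by exists y2; split => //; rewrite -ea eq_sym.
have [k hk] := cyc_orbit hcyc j0l ha hy; rewrite hk in ya.
have fix_a : forall k, iter k (c j0) a = a.
  by elim=> [|n IH] //=; rewrite IH -{1}ba cb.
by rewrite fix_a eqxx in ya.
Qed.

End NonProper.

Section Final.
Variable V : finType.
Variable E : seq {set V}.
Variable m : nat.

Lemma proper_nomono (chi : {ffun V -> 'I_m}) : Defs.proper E chi ->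
  forall f, f < size E -> ~ mono E (fun v => val (chi v)) f.
Proof.
move=> /allP hp f fl hm.
have := hp _ (mem_nth set0 fl).
case/exists_inP => x hx /exists_inP [y hy]; apply/negP; rewrite negbK.
by apply/eqP/val_inj; apply: hm.
Qed.

Lemma nonproper_min (chi : {ffun V -> 'I_m}) : ~~ Defs.proper E chi ->
  exists j0, [/\ j0 < size E, mono E (fun v => val (chi v)) j0 &
                 forall f, f < j0 -> ~ mono E (fun v => val (chi v)) f].
Proof.
case/allPn => e0 he0 hne.
pose monob f := (f < size E) && [forall x in edge E f, forall y in edge E f, chi x == chi y].
have ex : exists f, monob f.
  exists (index e0 E); apply/andP; split; first by rewrite index_mem.
  rewrite /edge nth_index //.
  apply/forall_inP => x hx; apply/forall_inP => y hy; apply/negPn/negP => nxy.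
  by move/negP: hne; apply; apply/exists_inP; exists x => //; apply/exists_inP; exists y.
have monoP : forall f, monob f -> mono E (fun v => val (chi v)) f.
  move=> f /andP[_ H] x y hx hy.
  by move/forall_inP: H => /(_ x hx)/forall_inP/(_ y hy)/eqP ->.
case: (ex_minnP ex) => j0 hj0 jmin.
exists j0; split.
- by case/andP: hj0.
- exact: monoP.
- move=> f fj hm.
  have : monob f.
    apply/andP; split; first by apply: ltn_trans fj _; case/andP: hj0.
    apply/forall_inP => x hx; apply/forall_inP => y hy; apply/eqP/val_inj; exact: hm.
  by move/jmin; rewrite leqNgt fj.
Qed.

End Final.


Lemma fund_compat (V : finType) (E : seq {set V}) (c : nat -> {perm V}) m
  (p : {ffun V -> 'I_#|V|}) (w : 'I_#|V| -> V) (pw : cancel p w) (wp : cancel w p)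
  (chi : {ffun V -> 'I_m}) :
  pbool (fund_ok (desH E c p) (map val [tuple chi (w i) | i < #|V|])) =
  pbool (compat E c (fun v => val (chi v)) p).
Proof.
pose col := (fun v => val (chi v)).
set h := [tuple chi (w i) | i < #|V|].
have nth_t : forall x, nth 0 (map val h) (p x) = col x.
    move=> x; rewrite (nth_map (chi x)) ?size_tuple ?ltn_ord //.
    by rewrite nth_mktuple pw.
  apply/idP/idP => /pboolP H; apply/pboolP.
- move=> z z' hz.
    have jl : (p z).+1 < size (map val h) by rewrite size_map size_tuple -hz ltn_ord.
    have [F1 F2] := H (p z) jl.
    rewrite -hz !nth_t in F1 F2.
    split => // cz hd; have := F2 hd; move: cz; rewrite /col /= => ->; by rewrite ltnn.
- move=> j; rewrite size_map size_tuple => jl.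
    have jl' : j < #|V| by apply: ltnW.
    set z := w (Ordinal jl'); set z' := w (Ordinal jl).
    have pz : (p z : nat) = j by rewrite /z wp.
    have pz' : (p z' : nat) = j.+1 by rewrite /z' wp.
    have hz : (p z' : nat) = (p z).+1 by rewrite pz pz'.
    have [C1 C2] := H z z' hz.
    have e1 : nth 0 (map val h) j = col z by rewrite -pz nth_t.
    have e2 : nth 0 (map val h) j.+1 = col z' by rewrite -pz' nth_t.
    rewrite e1 e2; split => // Sj.
    rewrite ltn_neqAle; apply/andP; split; last exact: C1.
    apply/eqP => cz; apply: C2 cz _; by rewrite pz.
Qed.

Local Open Scope ring_scope.

Theorem theorem4p3 (V : finType) (E : seq {set V}) (c : nat -> {perm V}) :
  is_hypertree E ->
  (forall e, e \in E -> prime #|e|) ->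
  (forall i : nat, (0 < i < size E)%N ->
     #|(\bigcup_(j < i) edge E j) :&: edge E i| = 1%N) ->
  (forall i : nat, (i < size E)%N -> is_cyclic_perm_of (edge E i) (c i)) ->
  forall m : nat,
    XH E m = \sum_(p : {ffun V -> 'I_#|V|} | injectiveb p) Fq #|V| m (desH E c p).
Proof.
move=> htree hprime _ hcyc m.
pose col (chi : {ffun V -> 'I_m}) := fun v => val (chi v).
pose compb (p : {ffun V -> 'I_#|V|}) chi := pbool (compat E c (col chi) p).
pose M (chi : {ffun V -> 'I_m}) : {mpoly int[m]} := \prod_(v : V) 'X_(chi v).
have stepA : XH E m = \sum_chi \sum_(p : {ffun V -> 'I_#|V|} | injectiveb p && compb p chi) M chi.
  rewrite /XH big_mkcond; apply: eq_bigr => chi _.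
  case: (boolP (Defs.proper E chi)) => hp.
  - have hnm := proper_nomono hp.
    rewrite (big_pred1 (p0 E c (col chi))) //.
    move=> p; rewrite /=; apply/idP/eqP.
    + case/andP => /injectiveP pi /pboolP pc.
      exact: (proper_uniq htree hprime hcyc hnm pi pc (p0_inj htree hprime hcyc hnm) (p0_compat htree hprime hcyc hnm)).
    + move=> ->; apply/andP; split; first by apply/injectiveP; exact: (p0_inj htree hprime hcyc hnm).
      by apply/pboolP; exact: (p0_compat htree hprime hcyc hnm).
  - rewrite big_pred0 // => p /=; apply/negbTE; apply/andP => -[/injectiveP pi /pboolP pc].
    have [j0 [j0l j0m j0min]] := nonproper_min hp.
    exact: (np_false htree hprime hcyc j0l j0m j0min pi pc).
have stepB : \sum_chi \sum_(p : {ffun V -> 'I_#|V|} | injectiveb p && compb p chi) M chi =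
             \sum_(p : {ffun V -> 'I_#|V|} | injectiveb p) \sum_(chi | compb p chi) M chi.
  under eq_bigr do rewrite big_mkcondr.
  rewrite exchange_big; apply: eq_bigr => p _; by rewrite [RHS]big_mkcond.
have stepC : forall p : {ffun V -> 'I_#|V|}, injectiveb p -> \sum_(chi | compb p chi) M chi = Fq #|V| m (desH E c p).
  move=> p /injectiveP pinj.
  have [w pw wp] : bijective p by apply: inj_card_bij pinj _; rewrite card_ord.
  pose h (chi : {ffun V -> 'I_m}) : #|V|.-tuple 'I_m := [tuple chi (w i) | i < #|V|].
  pose h' (s : #|V|.-tuple 'I_m) : {ffun V -> 'I_m} := [ffun v => tnth s (p v)].
  have hK : cancel h h' by move=> chi; apply/ffunP => v; rewrite ffunE tnth_mktuple pw.
  have h'K : cancel h' h by move=> s; apply: eq_from_tnth => i; rewrite tnth_mktuple ffunE wp.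
  rewrite /Fq (reindex h); last by apply: onW_bij; exists h'.
  apply: eq_big => [chi|chi _].
  - rewrite /h /compb /col; symmetry; exact: fund_compat.
  - rewrite big_tuple /M (reindex w); last by apply: onW_bij; exists p.
    by apply: eq_bigr => i _; rewrite tnth_mktuple.
rewrite stepA stepB; apply: eq_bigr => p hp; exact: stepC.
Qed.
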